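(* Let $(\mathbf{L},\mathbf{R})\in\mathcal{P}_{\mathsf N}$ be centered and suppose $\mathbf{L}\preceq^{\mathrm{BC}}\mathbf{R}$, i.e. $v\mathbf{L}\preceq v\mathbf{R}$ for every $v\in\{0,1\}^{\mathsf N+1}$. Then $(\mathbf{L},\mathbf{R})$ obeys region dominance: for every nonempty $X\subseteq[\mathsf N+1]$, $\big|\bigwedge_{i\in X}\mathbf{L}_{(i)}\big|\le\big|\bigwedge_{i\in X}\mathbf{R}_{(i)}\big|$ (and the pair is balanced).
   Context: $\mathcal{P}_{\mathsf N}$ denotes the set of pairs $(\mathbf{L},\mathbf{R})$ of $(0,1)$-matrices, $\mathbf{L}$ of size $(\mathsf N+1)\times m_L$ and $\mathbf{R}$ of size $(\mathsf N+1)\times m_R$, such that some index $p\in[\mathsf N+1]$ has row $p$ of $\mathbf{L}$ and row $p$ of $\mathbf{R}$ both zero. $\mathbf{A}_{(i)}$ is the $i$-th row; $e$ the all-ones row vector; $|v|=\sum_k|v_k|$; $\wedge$ is the bitwise AND of bit strings. The pair is centered if it is balanced ($|\mathbf{L}_{(i)}|=|\mathbf{R}_{(i)}|$ for all $i$) and some row satisfies $\mathbf{L}_{(i)}=e=\mathbf{R}_{(i)}$ (so both matrices have the same number of columns). For $x,y\in\mathbb{R}^d$, $x\preceq y$ means $\sum_{n=1}^k x^\downarrow_n\le\sum_{n=1}^k y^\downarrow_n$ for $k=1,\dots,d-1$ and $\sum_{n=1}^d x_n=\sum_{n=1}^d y_n$, with $x^\downarrow_n$ the $n$-th largest component. Thus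 $\big|\bigwedge_{i\in X}\mathbf{L}_{(i)}\big|$ is the number of columns of $\mathbf{L}$ having a $1$ in every row indexed by $X$. *)

(* Defs.v *)
From mathcomp Require Import all_boot all_order all_algebra.
Set Implicit Arguments. Unset Strict Implicit. Unset Printing Implicit Defensive.

Definition rownorm (n m : nat) (A : 'M[bool]_(n, m)) (i : 'I_n) : nat :=
  \sum_(j < m) (A i j : nat).

Definition vecmul (n m : nat) (v : 'I_n -> bool) (A : 'M[bool]_(n, m)) (j : 'I_m) : nat :=
  \sum_(i < n) ((v i && A i j) : nat).

Definition sorted_desc (d : nat) (x : 'I_d -> nat) : seq nat :=
  sort geq [seq x i | i <- enum 'I_d].

Definition topsum (d : nat) (x : 'I_d -> nat) (k : nat) : nat :=
  \sum_(n < k) nth 0 (sorted_desc x) n.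

Definition majorized (d : nat) (x y : 'I_d -> nat) : Prop :=
  (forall k, 1 <= k <= d.-1 -> topsum x k <= topsum y k) /\
  \sum_(n < d) x n = \sum_(n < d) y n.

Definition in_P (N mL mR : nat) (L : 'M[bool]_(N.+1, mL)) (R : 'M[bool]_(N.+1, mR)) : Prop :=
  exists p : 'I_N.+1, (forall j, L p j = false) /\ (forall j, R p j = false).

Definition balanced (N m : nat) (L R : 'M[bool]_(N.+1, m)) : Prop :=
  forall i, rownorm L i = rownorm R i.

Definition centered (N m : nat) (L R : 'M[bool]_(N.+1, m)) : Prop :=
  balanced L R /\ exists i : 'I_N.+1, (forall j, L i j = true) /\ (forall j, R i j = true).

Definition BC_dom (N m : nat) (L R : 'M[bool]_(N.+1, m)) : Prop :=
  forall v : 'I_N.+1 -> bool, majorized (vecmul v L) (vecmul v R).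

Definition wedge_card (n m : nat) (A : 'M[bool]_(n, m)) (X : {set 'I_n}) : nat :=
  #|[set j : 'I_m | [forall i in X, A i j]]|.

Definition region_dominance (N m : nat) (L R : 'M[bool]_(N.+1, m)) : Prop :=
  forall X : {set 'I_N.+1}, X != set0 -> wedge_card L X <= wedge_card R X.

(* Main.v *)
Require Import Defs.
From mathcomp Require Import all_boot all_order all_algebra.
From mathcomp Require Import zify.

Lemma cnt_enum (d : nat) (P : pred 'I_d) : count P (enum 'I_d) = #|P|.
Proof. rewrite cardE -size_filter. congr size. rewrite /enum_mem.
rewrite -filter_predI. apply: eq_filter => x /=. by rewrite andbT. Qed.

Lemma geq_trans' : transitive geq.
Proof. move=> a b c /= h1 h2; exact: leq_trans h2 h1. Qed.

Lemma sort_split (M : nat) (s : seq nat) : sorted geq s -> all (fun e => e <= M) s ->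
  exists r, s = nseq (count_mem M s) M ++ r /\ all (fun e => e < M) r.
Proof.
elim: s => [|h t IH] /=; first by exists [::].
move=> Hs /andP [hM tM].
have Ht : sorted geq t by exact: path_sorted Hs.
have Hall := order_path_min geq_trans' Hs.
case: (eqVneq h M) => [eh|nh].
  have [r [Er Ar]] := IH Ht tM. exists r; split => //.
  by rewrite eh add1n /= -Er.
have hlt : h < M by rewrite ltn_neqAle nh hM.
have -> : count_mem M t = 0.
  apply/eqP; rewrite -leqn0 leqNgt -has_count; apply/hasP => -[e et /eqP ee].
  move/allP: Hall => /(_ e et) /=; rewrite ee; by rewrite leqNgt hlt.
exists (h :: t); split; first by rewrite ?(negbTE nh).
rewrite /= hlt /=; apply/allP => e et; move/allP: Hall => /(_ e et) /= he.
exact: leq_ltn_trans he hlt.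
Qed.

Lemma topsum_take (s : seq nat) k : \sum_(n < k) nth 0 s n = sumn (take k s).
Proof.
elim: s k => [|h t IH] [|k] //=; rewrite ?big_ord0 //.
  by rewrite big1 // => i _; rewrite nth_nil.
by rewrite big_ord_recl /= IH.
Qed.

Lemma take_lt (M : nat) (r : seq nat) k : all (fun e => e < M) r -> sumn (take k r) <= k * M.-1.
Proof.
elim: r k => [|h t IH] [|k] //= /andP [hM tM].
have := IH k tM. lia.
Qed.

Lemma size_sd d (x : 'I_d -> nat) : size (sorted_desc x) = d.
Proof. by rewrite /sorted_desc size_sort size_map size_enum_ord. Qed.

Lemma topsum_full d (x : 'I_d -> nat) : topsum x d = \sum_(n < d) x n.
Proof.
rewrite /topsum topsum_take take_oversize ?size_sd //.
rewrite /sorted_desc (perm_sumn (permEl (perm_sort _ _))) sumnE big_map.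
by rewrite big_enum.
Qed.

Lemma count_sd d (x : 'I_d -> nat) M : count_mem M (sorted_desc x) = #|[pred j | x j == M]|.
Proof.
rewrite /sorted_desc ((permP (permEl (perm_sort _ _))) (pred1 M)) count_map -cnt_enum.
by apply: eq_count => j /=; rewrite eq_sym.
Qed.

Lemma key d M (x y : 'I_d -> nat) : (forall j, x j <= M) -> (forall j, y j <= M) -> 0 < M ->
  majorized x y -> #|[pred j | x j == M]| <= #|[pred j | y j == M]|.
Proof.
move=> xM yM M0 [Htop Hsum].
set a := #|[pred j | x j == M]|; set b := #|[pred j | y j == M]|.
rewrite leqNgt; apply/negP => ltba.
have ad : a <= d by rewrite /a; apply: leq_trans (max_card _) _; rewrite card_ord.
have Hk0 : forall k, k <= d -> 1 <= k -> topsum x k <= topsum y k.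
  move=> k kd k1; case: (ltnP k d) => kd'.
    apply: Htop; apply/andP; split; [lia|lia].
  have -> : k = d by lia.
  by rewrite !topsum_full Hsum.
have Hk := Hk0 a ad ltac:(lia).
have sx : sorted geq (sorted_desc x) by apply: sort_sorted => p q; exact: leq_total.
have sy : sorted geq (sorted_desc y) by apply: sort_sorted => p q; exact: leq_total.
have ax : all (fun e => e <= M) (sorted_desc x).
  by rewrite /sorted_desc all_sort all_map; apply/allP => j _ /=.
have ay : all (fun e => e <= M) (sorted_desc y).
  by rewrite /sorted_desc all_sort all_map; apply/allP => j _ /=.
have [rx [Ex _]] := @sort_split M _ sx ax.
have [ry [Ey Ary]] := @sort_split M _ sy ay.
rewrite count_sd in Ex; rewrite count_sd in Ey.
move: Hk; rewrite /topsum !topsum_take Ex Ey -/a -/b.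
rewrite {1}take_cat size_nseq ltnn subnn take0 cats0 sumn_nseq.
have -> : a = b + (a - b) by lia.
rewrite take_cat size_nseq ltnNge leq_addr /= addKn.
rewrite sumn_cat sumn_nseq.
have := @take_lt M ry (a - b) Ary.
have c1 : 0 < a - b by lia.
move: c1; set c := a - b => c1 h2 h3.
have eM : M = M.-1.+1 by lia.
move: h2 h3; rewrite eM; move: (M.-1) => M' h2 h3.
rewrite /= in h2. nia.
Qed.

Lemma vec_card (n m : nat) (X : {set 'I_n}) (A : 'M[bool]_(n,m)) j :
  vecmul (fun i => i \in X) A j = #|[pred i in X | A i j]|.
Proof.
rewrite /vecmul -sum1_card [RHS]big_mkcond /=; apply: eq_bigr => i _.
by rewrite inE; case: (_ && _).
Qed.

Lemma vec_le (n m : nat) (X : {set 'I_n}) (A : 'M[bool]_(n,m)) j :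
  vecmul (fun i => i \in X) A j <= #|X|.
Proof. rewrite vec_card; apply: subset_leq_card; apply/subsetP => i; rewrite inE => /andP[]. by []. Qed.

Lemma vec_eq (n m : nat) (X : {set 'I_n}) (A : 'M[bool]_(n,m)) j :
  (vecmul (fun i => i \in X) A j == #|X|) = [forall i in X, A i j].
Proof.
have sub : [pred i in X | A i j] \subset X by apply/subsetP => i; rewrite inE => /andP[].
rewrite vec_card (subset_leqif_card sub).2.
apply/subsetP/forall_inP => H i iX.
  by have := H i iX; rewrite inE => /andP[].
by rewrite inE iX H.
Qed.

Lemma wedge_eq (n m : nat) (X : {set 'I_n}) (A : 'M[bool]_(n,m)) :
  wedge_card A X = #|[pred j | vecmul (fun i => i \in X) A j == #|X|]|.
Proof. rewrite /wedge_card; apply: eq_card => j; rewrite inE /=; rewrite [RHS]inE /= vec_eq. by []. Qed.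

Theorem theorem4 (N m : nat) (L R : 'M[bool]_(N.+1, m)) :
  in_P L R -> centered L R -> BC_dom L R ->
  region_dominance L R /\ balanced L R.
Proof.
move=> _ [Hbal _] Hbc; split => // X XN0.
rewrite !wedge_eq; apply: key.
- by move=> j; apply: vec_le.
- by move=> j; apply: vec_le.
- by rewrite card_gt0.
- exact: Hbc.
Qed.
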